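(* Let $m \ge n$ and let $\mathbf{A} \in \mathbb{R}^{m\times n}$ have rank $n$. Let $\mathbf{A} = \mathbf{Q}\mathbf{R}$ be its reduced QR decomposition, with $\mathbf{Q} \in \mathbb{R}^{m\times n}$ satisfying $\mathbf{Q}^T\mathbf{Q} = \mathbf{I}_n$ and $\mathbf{R}\in\mathbb{R}^{n\times n}$ upper triangular (hence invertible). Suppose $\mathbf{A}' \mapsto (\mathbf{Q}(\mathbf{A}'),\mathbf{R}(\mathbf{A}'))$ is a differentiable map, defined on a neighborhood of $\mathbf{A}$, giving such a decomposition $\mathbf{A}'=\mathbf{Q}(\mathbf{A}')\mathbf{R}(\mathbf{A}')$ for every $\mathbf{A}'$ in that neighborhood (e.g. the QR decomposition normalized so that $\mathbf{R}$ has positive diagonal). Let $\bar{\mathbf{Q}}\in\mathbb{R}^{m\times n}$ and $\bar{\mathbf{R}}\in\mathbb{R}^{n\times n}$ be arbitrary (upstream gradients). Then the reverse-mode gradient of $\mathbf{A}$ is $$\bar{\mathbf{A}} = \left[\bar{\mathbf{Q}} + \mathbf{Q}\,\mathrm{copyltu}(\mathbf{M})\right]\mathbf{R}^{-T},\qquad \mathbf{M} = \mathbf{R}\bar{\mathbf{R}}^T - \bar{\mathbf{Q}}^T\mathbf{Q}.$$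
   Context: Reverse-mode gradient: given a differentiable map $\mathbf{A}\mapsto(\mathbf{Q}(\mathbf{A}),\mathbf{R}(\mathbf{A}))$ and upstream matrices $\bar{\mathbf{Q}},\bar{\mathbf{R}}$ of the same shapes as $\mathbf{Q},\mathbf{R}$, the gradient $\bar{\mathbf{A}}$ is the unique matrix of the shape of $\mathbf{A}$ such that $\mathrm{Tr}(\bar{\mathbf{A}}^T d\mathbf{A}) = \mathrm{Tr}(\bar{\mathbf{Q}}^T d\mathbf{Q}) + \mathrm{Tr}(\bar{\mathbf{R}}^T d\mathbf{R})$ for every direction $d\mathbf{A}$, where $d\mathbf{Q}, d\mathbf{R}$ are the directional derivatives of $\mathbf{Q},\mathbf{R}$ at $\mathbf{A}$ in direction $d\mathbf{A}$. For a square matrix $\mathbf{M}$, $\mathrm{copyltu}(\mathbf{M})$ is the symmetric matrix with entries $\mathrm{copyltu}(\mathbf{M})_{ij} = \mathbf{M}_{\max(i,j),\min(i,j)}$ (the lower triangle of $\mathbf{M}$ copied to the upper triangle); equivalently $\mathrm{copyltu}(\mathbf{M}) = \mathrm{sym}(\mathbf{M}\circ\mathbf{E})$, where $\mathrm{sym}(\mathbf{B}) = (\mathbf{B}+\mathbf{B}^T)/2$, $\circ$ is the entrywise (Hadamard) product, and $\mathbf{E}$ is the matrix with $e_{ij}=0$ if $i<j$, $e_{ij}=1$ if $i=j$, $e_{ij}=2$ if $i>j$. $\mathbf{R}^{-T}$ denotes $(\mathbf{R}^{-1})^T$. *)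

(* Defs.v *)
From HB Require Import structures.
From mathcomp Require Import all_boot all_order all_algebra.
From mathcomp Require Import all_classical all_reals all_analysis.
Set Implicit Arguments. Unset Strict Implicit. Unset Printing Implicit Defensive.
Import Order.TTheory GRing.Theory Num.Theory.
Local Open Scope ring_scope.

Definition upper_triangular (R : pzRingType) (n : nat) (M : 'M[R]_n) : Prop :=
  forall i j : 'I_n, (j < i)%N -> M i j = 0.

Definition copyltu (R : pzRingType) (n : nat) (M : 'M[R]_n) : 'M[R]_n :=
  \matrix_(i, j) M (Order.max i j) (Order.min i j).

(* Main.v *)
Require Import Defs.
From HB Require Import structures.
From mathcomp Require Import all_boot all_order all_algebra.
From mathcomp Require Import all_classical all_reals all_analysis matrix_normedtype.
Import numFieldNormedType.Exports.
Import Order.TTheory GRing.Theory Num.Theory.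
Local Open Scope ring_scope.

Set Implicit Arguments. Unset Strict Implicit.

Section Helpers.
Variable R : realType.

Definition ent p q (i : 'I_p) (j : 'I_q) (N : 'M[R]_(p, q)) : R := N i j.

Lemma ent_linear p q i j : linear (@ent p q i j).
Proof. by move=> a u v; rewrite /ent !mxE. Qed.

HB.instance Definition _ p q i j :=
  GRing.isLinear.Build R 'M[R]_(p, q) R _ (@ent p q i j) (@ent_linear p q i j).

Variable U : normedModType R.

Lemma ent_comp_diff p q (f : U -> 'M[R]_(p, q)) x i j :
  differentiable f x ->
  differentiable (fun X => f X i j) x /\
  forall v, 'd (fun X => f X i j) x v = ('d f x v) i j.
Proof.
move=> df.
have dent : differentiable (@ent p q i j) (f x).
  exact/linear_differentiable/coord_continuous.
have -> : (fun X => f X i j) = (@ent p q i j) \o f by [].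
split; first exact: differentiable_comp.
move=> v; rewrite diff_comp // /= diff_lin //; exact: coord_continuous.
Qed.

Lemma diff_sum_prod n (F G : 'I_n -> U -> R) x :
  (forall k, differentiable (F k) x) -> (forall k, differentiable (G k) x) ->
  differentiable (fun X => \sum_(k < n) F k X * G k X) x /\
  forall v, 'd (fun X => \sum_(k < n) F k X * G k X) x v =
    \sum_(k < n) ('d (F k) x v * G k x + F k x * 'd (G k) x v).
Proof.
move=> dF dG; elim: n F G dF dG => [|n IH] F G dF dG.
  have -> : (fun X => \sum_(k < 0) F k X * G k X) = cst 0.
    by apply/funext => X; rewrite big_ord0.
  split; first exact: differentiable_cst.
  by move=> v; rewrite diff_cst big_ord0.
have [d1 e1] := IH (fun k => F (lift ord0 k)) (fun k => G (lift ord0 k))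
  (fun k => dF _) (fun k => dG _).
have -> : (fun X => \sum_(k < n.+1) F k X * G k X) =
   (F ord0 * G ord0) + (fun X => \sum_(k < n) F (lift ord0 k) X * G (lift ord0 k) X).
  by apply/funext => X; rewrite big_ord_recl.
have dM : differentiable (F ord0 * G ord0) x by apply: differentiableM.
split; first exact: differentiableD.
move=> v. rewrite diffD //.
rewrite big_ord_recl -e1.
have h0 : 'd (F ord0 * G ord0) x v = 'd (F ord0) x v * G ord0 x + F ord0 x * 'd (G ord0) x v.
  have := diffM (dF ord0) (dG ord0). move=> /(congr1 (fun h => h v)) -> /=.
  change (F ord0 x * 'd (G ord0) x v + G ord0 x * 'd (F ord0) x v = 'd (F ord0) x v * G ord0 x + F ord0 x * 'd (G ord0) x v).
  by rewrite addrC mulrC.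
by rewrite -h0.
Qed.

Lemma near_diff (W : normedModType R) (f g : U -> W) x v :
  differentiable f x -> differentiable g x ->
  (\forall y \near x, f y = g y) -> 'd f x v = 'd g x v.
Proof.
by move=> df dg fg; rewrite -!deriveE //; apply: near_eq_derive.
Qed.

End Helpers.

Section Alg.
Variable R : realFieldType.

Lemma upper_diag_neq0 n (Rm : 'M[R]_n) :
  upper_triangular Rm -> Rm \in unitmx -> forall i, Rm i i != 0.
Proof.
move=> up u i; apply/eqP => H.
move: u; rewrite unitmxE -det_tr det_trig; last first.
  by apply/is_trig_mxP => a b ab; rewrite mxE up.
by rewrite (bigD1 i) //= mxE H mul0r unitr0.
Qed.

Lemma upper_of_mul n (X Rm : 'M[R]_n) :
  upper_triangular Rm -> (forall i, Rm i i != 0) ->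
  upper_triangular (X *m Rm) -> upper_triangular X.
Proof.
move=> up dg XR.
suff H : forall jn (i j : 'I_n), nat_of_ord j = jn -> (j < i)%N -> X i j = 0.
  by move=> i j; apply: H.
elim/ltn_ind => jn IH i j Ej ji.
have := XR i j ji; rewrite mxE (bigD1 j) //= big1 ?addr0.
  by move/eqP; rewrite mulf_eq0 (negbTE (dg j)) orbF => /eqP.
move=> k kj; case: (ltngtP k j) => [kltj|jltk|keq].
- by rewrite (IH k) ?mul0r //; [rewrite -Ej | apply: ltn_trans ji].
- by rewrite up ?mulr0.
- by move: kj; rewrite (val_inj keq) eqxx.
Qed.

Lemma copyltu_sym n (M : 'M[R]_n) : (copyltu M)^T = copyltu M.
Proof. by apply/matrixP => i j; rewrite !mxE maxC minC. Qed.

Lemma copyltu_low n (M : 'M[R]_n) (i j : 'I_n) : (j <= i)%N -> copyltu M i j = M i j.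
Proof.
move=> ji; rewrite mxE.
have -> : Order.max i j = i.
  by rewrite maxEle leEord; case: (leqP i j) => // ij; apply/val_inj/anti_leq; rewrite ij ji.
have -> : Order.min i j = j.
  by rewrite minEle leEord; case: (leqP i j) => // ij; apply/val_inj/anti_leq; rewrite ij ji.
by [].
Qed.

Lemma trace_strict n (D U : 'M[R]_n) :
  (forall i j : 'I_n, (j <= i)%N -> D i j = 0) -> upper_triangular U ->
  \tr (D *m U) = 0.
Proof.
move=> HD up; rewrite /mxtrace big1 // => i _; rewrite mxE big1 // => j _.
by case: (leqP j i) => h; [rewrite HD ?mul0r | rewrite up ?mulr0].
Qed.

Lemma trace_alg m n (Q dQ Qbar : 'M[R]_(m, n)) (Rm dR Rbar : 'M[R]_n)
  (dA : 'M[R]_(m, n)) :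
  Q^T *m Q = 1%:M -> Rm \in unitmx -> upper_triangular Rm ->
  upper_triangular dR ->
  dA = dQ *m Rm + Q *m dR -> dQ^T *m Q + Q^T *m dQ = 0 ->
  let M := Rm *m Rbar^T - Qbar^T *m Q in
  let Abar := (Qbar + Q *m copyltu M) *m (invmx Rm)^T in
  \tr (Abar^T *m dA) = \tr (Qbar^T *m dQ) + \tr (Rbar^T *m dR).
Proof.
move=> QQ uR upR updR -> skew M Abar.
set Ri := invmx Rm; set K := copyltu M.
have KT : K^T = K := copyltu_sym M.
set X := Qbar^T + K *m Q^T.
have AbT : Abar^T = Ri *m X by rewrite /Abar trmx_mul trmxK linearD /= trmx_mul KT.
rewrite AbT -mulmxA mxtrace_mulC mulmxDr mulmxDl mxtraceD.
have -> : X *m (dQ *m Rm) *m Ri = X *m dQ by rewrite -!mulmxA mulmxV // mulmx1.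
rewrite /X mulmxDl mxtraceD -addrA; congr (_ + _).
have -> : \tr (K *m Q^T *m dQ) = 0.
  set S := Q^T *m dQ.
  have ST : S^T = - S by apply/eqP; rewrite -addr_eq0 /S trmx_mul trmxK skew.
  have h : \tr (K *m S) = - \tr (K *m S).
    rewrite -[LHS]mxtrace_tr trmx_mul ST KT mulNmx linearN /=.
    by rewrite mxtrace_mulC.
  rewrite -mulmxA; move/eqP: h; rewrite -addr_eq0 -mulr2n mulrn_eq0 /=.
  by move/eqP.
rewrite add0r.
have -> : (Qbar^T + K *m Q^T) *m (Q *m dR) = (Qbar^T *m Q + K) *m dR.
  by rewrite mulmxA !mulmxDl -[K *m Q^T *m Q]mulmxA QQ mulmx1.
have -> : Qbar^T *m Q + K = (K - M) + Rm *m Rbar^T.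
  by rewrite /M opprB addrA subrK addrC.
rewrite mulmxDl mulmxDl mxtraceD.
have -> : \tr (Rm *m Rbar^T *m dR *m Ri) = \tr (Rbar^T *m dR).
  by rewrite -!mulmxA mxtrace_mulC -!mulmxA mulVmx // mulmx1.
rewrite -[(K - M) *m dR *m Ri]mulmxA (trace_strict (D:=K-M)) ?add0r //.
  by move=> i j ji; rewrite [(K - M) i j]mxE [(- M) i j]mxE (copyltu_low M ji) subrr.
apply: (upper_of_mul upR (upper_diag_neq0 upR uR)).
by rewrite -mulmxA mulVmx // mulmx1.
Qed.

End Alg.

Theorem proposition1 (R : realType) (m n : nat) (A : 'M[R]_(m, n))
  (Qf : 'M[R]_(m, n) -> 'M[R]_(m, n)) (Rf : 'M[R]_(m, n) -> 'M[R]_n)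
  (Qbar : 'M[R]_(m, n)) (Rbar : 'M[R]_n) :
  (n <= m)%N ->
  \rank A = n ->
  (\forall A' \near A,
      A' = Qf A' *m Rf A' /\ (Qf A')^T *m Qf A' = 1%:M /\ upper_triangular (Rf A')) ->
  differentiable Qf A -> differentiable Rf A ->
  let Q := Qf A in let Rm := Rf A in
  let M := Rm *m Rbar^T - Qbar^T *m Q in
  let Abar := (Qbar + Q *m copyltu M) *m (invmx Rm)^T in
  forall dA : 'M[R]_(m, n),
    \tr (Abar^T *m dA) = \tr (Qbar^T *m ('d Qf A dA)) + \tr (Rbar^T *m ('d Rf A dA)).
Proof.
move=> hmn hrank hnear dQf dRf Q Rm M Abar dA.
have [eA [QQ upR]] := nbhs_singleton hnear.
have uR : Rm \in unitmx.
  rewrite -row_free_unit /row_free; apply/eqP/anti_leq.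
  rewrite rank_leq_row /= -{1}hrank eA; exact: mxrankM_maxr.
have dQe := fun i j => ent_comp_diff i j dQf.
have dRe := fun i j => ent_comp_diff i j dRf.
suff [h1 [h2 h3]] : upper_triangular ('d Rf A dA) /\
   dA = 'd Qf A dA *m Rm + Q *m 'd Rf A dA /\
   ('d Qf A dA)^T *m Q + Q^T *m 'd Qf A dA = 0.
  exact: (trace_alg Qbar Rbar QQ uR upR h1 h2 h3).
split; [|split].
- move=> i j ji; have [d1 e1] := dRe i j; rewrite -e1.
  rewrite (@near_diff _ _ _ _ (cst 0) _ _ d1 (differentiable_cst _ _)).
    by rewrite diff_cst.
  by apply: filterS hnear => X [_ [_ uX]]; rewrite uX.
- apply/matrixP => i j.
  have dent : differentiable (@ent R m n i j) A.
    exact/linear_differentiable/coord_continuous.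
  have [d1 e1] := diff_sum_prod (F := fun k X => Qf X i k) (G := fun k X => Rf X k j)
     (fun k => (proj1 (dQe i k))) (fun k => (proj1 (dRe k j))) (x := A).
  have := @near_diff _ _ _ _ (@ent R m n i j) A dA d1 dent.
  rewrite e1 diff_lin; last exact: coord_continuous.
  move=> h.
  transitivity (\sum_(k < n) ('d (fun X => Qf X i k) A dA * Rf A k j +
     Qf A i k * 'd (fun X => Rf X k j) A dA)).
    symmetry; apply: h.
    by apply: filterS hnear => X [eX _]; rewrite /ent [in RHS]eX mxE.
  rewrite !mxE -big_split /=; apply: eq_bigr => k _.
  by rewrite (proj2 (dQe i k)) (proj2 (dRe k j)).
- apply/matrixP => i j.
  have [d1 e1] := diff_sum_prod (F := fun k X => Qf X k i) (G := fun k X => Qf X k j)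
     (fun k => (proj1 (dQe k i))) (fun k => (proj1 (dQe k j))) (x := A).
  have := @near_diff _ _ _ _ (cst ((1%:M : 'M[R]_n) i j)) A dA d1
    (differentiable_cst _ _).
  rewrite e1 diff_cst.
  move=> h; rewrite !mxE -big_split /= -[RHS]/(0 : R) -[RHS](h _); last first.
    by apply: filterS hnear => X [_ [QX _]]; rewrite /cst -QX mxE; apply: eq_bigr => k _; rewrite mxE.
  apply: eq_bigr => k _.
  by rewrite !mxE (proj2 (dQe k i)) (proj2 (dQe k j)).
Qed.
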